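(* Let $\delta\ge1$, let $G=(V,E,w)$ be a weighted graph, and let $\mathcal{R}$ be the set of constraints $\{i,j|k\}$, over all triples of distinct indices $i,j,k$, such that $w_{ij}>\delta^2\max\{w_{ik},w_{jk}\}$. If $T$ is any binary HC-tree for $V$ consistent with every constraint in $\mathcal{R}$, then $\rho_G(T)\le(\delta^2+1)\rho^*_G$.
   Context: Weights are symmetric, nonnegative, and $0$ on non-edges. An HC-tree for $V=\{v_1,\dots,v_n\}$ is a rooted tree with leaf set $V$. $T$ is consistent with $\{i,j|k\}$ if $\mathrm{LCA}(v_i,v_j)$ is a proper descendant of $\mathrm{LCA}(v_i,v_j,v_k)$ (relation $\{i,j|k\}$ holds in $T$); relation $\{i|j|k\}$ holds if $\mathrm{LCA}(v_i,v_j)=\mathrm{LCA}(v_j,v_k)=\mathrm{LCA}(v_i,v_j,v_k)$. Triplet cost $c_T(i,j,k)$: $w_{ik}+w_{jk}$ if $\{i,j|k\}$; $w_{ij}+w_{jk}$ if $\{i,k|j\}$; $w_{ij}+w_{ik}$ if $\{j,k|i\}$; $w_{ij}+w_{jk}+w_{ik}$ if $\{i|j|k\}$. $\mathrm{TC}_G(T)=\sum c_T(i,j,k)$ and $\mathrm{BC}(G)=\sum\min\{w_{ij}+w_{ik},w_{ij}+w_{jk},w_{ik}+w_{jk}\}$ over unordered triples of distinct indices; $\rho_G(T)=\mathrm{TC}_G(T)/\mathrm{BC}(G)$ (with $0/0=1$, $x/0=+\infty$ for $x>0$), $\rho^*_G=\min_T\rho_G(T)$ over all HC-trees. *)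

(* Defs.v *)
From HB Require Import structures.
From mathcomp Require Import all_boot all_order all_algebra.
From mathcomp Require Import boolp classical_sets reals constructive_ereal ereal.
Set Implicit Arguments. Unset Strict Implicit. Unset Printing Implicit Defensive.
Import Order.TTheory GRing.Theory Num.Theory.

Inductive tree (n : nat) : Type :=
  | Leaf of 'I_n
  | Node of seq (tree n).
Arguments Leaf {n}.
Arguments Node {n}.

Section Trees.
Variable n : nat.

Fixpoint leaves (t : tree n) : seq 'I_n :=
  match t with
  | Leaf v => [:: v]
  | Node cs => flatten (map leaves cs)
  end.

Fixpoint subtrees (t : tree n) : seq (tree n) :=
  match t with
  | Leaf _ => [:: t]
  | Node cs => t :: flatten (map subtrees cs)
  end.

Definition strict_subtrees (t : tree n) : seq (tree n) :=
  match t with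
  | Leaf _ => [::]
  | Node cs => flatten (map subtrees cs)
  end.

Fixpoint tree_eqb (s t : tree n) : bool :=
  match s, t with
  | Leaf a, Leaf b => a == b
  | Node cs, Node ds =>
      (fix go (cs ds : seq (tree n)) : bool :=
         match cs, ds with
         | [::], [::] => true
         | c :: cs', d :: ds' => tree_eqb c d && go cs' ds'
         | _, _ => false
         end) cs ds
  | _, _ => false
  end.

Fixpoint nodes_ok (P : nat -> bool) (t : tree n) : bool :=
  match t with
  | Leaf _ => true
  | Node cs => P (size cs) && all (nodes_ok P) cs
  end.

(* HC-tree for V: a rooted tree whose leaves are exactly V, each once
   (internal nodes have at least one child, so every leaf is a vertex). *)
Definition HC_tree (t : tree n) : bool :=
  perm_eq (leaves t) (enum 'I_n) && nodes_ok (fun k => 0 < k) t.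

Definition binary_HC_tree (t : tree n) : bool :=
  HC_tree t && nodes_ok (fun k => k == 2) t.

(* lowest common ancestor of the leaves in S: descend into the (unique, in an
   HC-tree) child containing all of S as long as possible. *)
Fixpoint lca (S : seq 'I_n) (t : tree n) : tree n :=
  match t with
  | Leaf _ => t
  | Node cs =>
      (fix go (cs : seq (tree n)) : tree n :=
         match cs with
         | [::] => t
         | c :: cs' => if all (fun v => v \in leaves c) S then lca S c else go cs'
         end) cs
  end.

Definition proper_desc (s u : tree n) : bool :=
  has (tree_eqb s) (strict_subtrees u).

Definition rel2 (T : tree n) (i j k : 'I_n) : bool :=
  proper_desc (lca [:: i; j] T) (lca [:: i; j; k] T).

Definition rel3 (T : tree n) (i j k : 'I_n) : bool :=
  tree_eqb (lca [:: i; j] T) (lca [:: i; j; k] T) &&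
  tree_eqb (lca [:: j; k] T) (lca [:: i; j; k] T).

End Trees.

Section Costs.
Variables (R : realType) (n : nat) (w : 'I_n -> 'I_n -> R).
Local Open Scope ring_scope.

Definition triplet_cost (T : tree n) (i j k : 'I_n) : R :=
  if rel2 T i j k then w i k + w j k
  else if rel2 T i k j then w i j + w j k
  else if rel2 T j k i then w i j + w i k
  else if rel3 T i j k then w i j + w j k + w i k
  else 0.

(* sums over unordered triples {i,j,k} of distinct indices: i < j < k *)
Definition TC (T : tree n) : R :=
  \sum_(i : 'I_n) \sum_(j : 'I_n | (i < j)%N) \sum_(k : 'I_n | (j < k)%N) triplet_cost T i j k.

Definition BC : R :=
  \sum_(i : 'I_n) \sum_(j : 'I_n | (i < j)%N) \sum_(k : 'I_n | (j < k)%N)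
     Num.min (w i j + w i k) (Num.min (w i j + w j k) (w i k + w j k)).

Definition rho (T : tree n) : \bar R :=
  if BC == 0 then (if TC T == 0 then 1%E else +oo%E)
  else ((TC T) / BC)%:E.

(* rho*_G = min over all HC-trees (the infimum is attained) *)
Definition rho_star : \bar R :=
  ereal_inf [set rho T | T in [set T : tree n | HC_tree T]].

End Costs.

(* Main.v *)
Require Import Defs.
From HB Require Import structures.
From mathcomp Require Import all_boot all_order all_algebra.
From mathcomp Require Import boolp classical_sets reals constructive_ereal ereal.
Set Implicit Arguments. Unset Strict Implicit. Unset Printing Implicit Defensive.
Import Order.TTheory GRing.Theory Num.Theory.
From mathcomp Require Import ring lra.

Section TreeFacts.
Variable n : nat.
Implicit Types (s t u : tree n) (cs ds : seq (tree n)).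

Fixpoint allT (P : tree n -> Prop) cs : Prop :=
  match cs with [::] => True | c :: cs' => P c /\ allT P cs' end.

Definition tree_ind2 (P : tree n -> Prop) (HL : forall v, P (Leaf v))
  (HN : forall cs, allT P cs -> P (Node cs)) : forall t, P t :=
  fix F t := match t with
  | Leaf v => HL v
  | Node cs => HN cs ((fix G cs := match cs return allT P cs with
                       | [::] => I | c :: cs' => conj (F c) (G cs') end) cs)
  end.

Lemma tree_eqbP : Equality.axiom (@tree_eqb n).
Proof.
move=> s t; apply: (iffP idP); last first.
  move=> <-; elim/tree_ind2: s => [v|cs IH] /=; first exact: eqxx.
  by elim: cs IH => [|c cs IHc] //= [-> /IHc].
elim/tree_ind2: s t => [v|cs IH] [w|ds] //=; first by move/eqP->.
elim: cs ds IH => [|c cs IHc] [|d ds] //= [Hc /IHc H] /andP[/Hc -> /H [->]].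
done.
Qed.

HB.instance Definition _ := hasDecEq.Build (tree n) tree_eqbP.

Lemma allT_in P cs : allT P cs -> forall c, c \in cs -> P c.
Proof.
elim: cs => [|d cs IH] //= [Pd /IH H] c; rewrite in_cons => /orP[/eqP->|] //; exact: H.
Qed.

Fixpoint tsize t : nat := match t with Leaf _ => 1 | Node cs => (sumn (map tsize cs)).+1 end.

Lemma subtreesE t u : (u \in subtrees t) = (u == t) || (u \in strict_subtrees t).
Proof. by case: t => [v|cs] /=; rewrite ?in_cons ?in_nil ?orbF. Qed.

Lemma self_in t : t \in subtrees t.
Proof. by rewrite subtreesE eqxx. Qed.

Lemma strictE cs u : (u \in strict_subtrees (Node cs)) = has (fun c => u \in subtrees c) cs.
Proof.
rewrite /=; apply/flatten_mapP/hasP => [[c H1 H2]|[c H1 H2]]; by exists c.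
Qed.

Lemma tsize_le t u : u \in subtrees t -> (tsize u <= tsize t)%N.
Proof.
elim/tree_ind2: t => [v|cs IH]; first by rewrite /= in_cons in_nil orbF => /eqP->.
rewrite subtreesE => /orP[/eqP->//|]; rewrite strictE => /hasP[c Hc Hu].
have := allT_in IH Hc Hu => H; apply: (leq_trans H) => /=.
apply: leqW; elim: cs Hc {IH} => [|d cs IHc] //; rewrite in_cons => /orP[/eqP->|/IHc] /=.
  exact: leq_addr.
by move=> H1; apply: (leq_trans H1); exact: leq_addl.
Qed.

Lemma tsize_lt t u : u \in strict_subtrees t -> (tsize u < tsize t)%N.
Proof.
case: t => [v|cs] //; rewrite strictE => /hasP[c Hc Hu].
have H := tsize_le Hu; rewrite /=; rewrite ltnS; apply: (leq_trans H).
elim: cs Hc => [|d cs IHc] //; rewrite in_cons => /orP[/eqP->|/IHc] /=.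
  exact: leq_addr.
by move=> H1; apply: (leq_trans H1); exact: leq_addl.
Qed.

Lemma sub_child cs c u : c \in cs -> u \in subtrees c -> u \in subtrees (Node cs).
Proof. by move=> Hc Hu; rewrite subtreesE strictE; apply/orP; right; apply/hasP; exists c. Qed.

Lemma leaves_sub t u : u \in subtrees t -> {subset leaves u <= leaves t}.
Proof.
elim/tree_ind2: t => [v|cs IH]; first by rewrite /= in_cons in_nil orbF => /eqP->.
rewrite subtreesE => /orP[/eqP->//|]; rewrite strictE => /hasP[c Hc Hu] x Hx.
have := allT_in IH Hc Hu x Hx => H; rewrite /=; apply/flatten_mapP; by exists c.
Qed.

Lemma child_uniq cs c : uniq (leaves (Node cs)) -> c \in cs -> uniq (leaves c).
Proof.
elim: cs => [|d cs IH] //=; rewrite cat_uniq in_cons => /and3P[H1 _ H3] /orP[/eqP->//|].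
exact: IH.
Qed.

Lemma child_disj cs c1 c2 x : uniq (leaves (Node cs)) -> c1 \in cs -> c2 \in cs ->
  x \in leaves c1 -> x \in leaves c2 -> c1 = c2.
Proof.
elim: cs => [|d cs IH] //=; rewrite cat_uniq !in_cons => /and3P[_ H2 H3].
have Hd : forall c, c \in cs -> x \in leaves c -> x \in leaves d -> False.
  move=> c Hc Hxc Hxd; move/hasP: H2; apply; exists x => //.
  by apply/flatten_mapP; exists c.
move=> /orP[/eqP->|H1] /orP[/eqP->|H2'] X1 X2 //.
- by case: (Hd _ H2' X2 X1).
- by case: (Hd _ H1 X1 X2).
- exact: IH.
Qed.

Fixpoint lgo (S : seq 'I_n) (t0 : tree n) cs : tree n :=
  match cs with
  | [::] => t0
  | c :: cs' => if all (fun v => v \in leaves c) S then lca S c else lgo S t0 cs'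
  end.

Lemma lcaE S cs : lca S (Node cs) = lgo S (Node cs) cs.
Proof. simpl. set t0 := Node cs. clearbody t0. by elim: cs => //= c cs ->. Qed.

Lemma lca_in S t : lca S t \in subtrees t.
Proof.
elim/tree_ind2: t => [v|cs IH]; first exact: self_in.
rewrite lcaE; suff: forall ds, {subset ds <= cs} -> lgo S (Node cs) ds \in subtrees (Node cs) by apply.
elim => [|d ds IHd] Hsub /=; first exact: self_in.
case: ifP => _; last by apply: IHd => c Hc; apply: Hsub; rewrite in_cons Hc orbT.
have Hd : d \in cs by apply: Hsub; rewrite in_cons eqxx.
exact: sub_child Hd (allT_in IH Hd).
Qed.

Lemma lca_leaves S t : {subset S <= leaves t} -> {subset S <= leaves (lca S t)}.
Proof.
elim/tree_ind2: t => [v|cs IH] //.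
rewrite lcaE => HS; suff: forall ds, {subset ds <= cs} -> {subset S <= leaves (lgo S (Node cs) ds)} by apply.
elim => [|d ds IHd] Hsub //=.
case: ifP => Hall; last by apply: IHd => c Hc; apply: Hsub; rewrite in_cons Hc orbT.
have Hd : d \in cs by apply: Hsub; rewrite in_cons eqxx.
apply: (allT_in IH Hd); exact/allP.
Qed.

Lemma lca_lowest S t u x : uniq (leaves t) -> x \in S -> u \in subtrees t ->
  {subset S <= leaves u} -> lca S t \in subtrees u.
Proof.
move=> + xS; elim/tree_ind2: t u => [v|cs IH] u Hun.
  by rewrite /= in_cons in_nil orbF => /eqP-> _; exact: self_in.
rewrite subtreesE => /orP[/eqP-> _|]; first exact: lca_in.
rewrite strictE => /hasP[c Hc Hu] HS.
have HSc : {subset S <= leaves c} by move=> y /HS; apply: leaves_sub.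
rewrite lcaE; suff: forall ds, c \in ds -> {subset ds <= cs} -> lgo S (Node cs) ds \in subtrees u by apply.
elim => [|d ds IHd] //= Hcd Hsub.
have Hd : d \in cs by apply: Hsub; rewrite in_cons eqxx.
case: ifP => Hall.
  have Ecd : d = c by apply: (child_disj Hun Hd Hc (x := x)); [move/allP: Hall; apply | exact: HSc].
  subst d; apply: (allT_in IH Hc) => //; exact: child_uniq Hun Hc.
apply: IHd.
  move: Hcd; rewrite in_cons => /orP[/eqP Ec|//].
  by subst d; move: Hall; have -> : all (fun v => v \in leaves c) S by apply/allP.
by move=> e He; apply: Hsub; rewrite in_cons He orbT.
Qed.

Lemma nested t u v x : uniq (leaves t) -> u \in subtrees t -> v \in subtrees t ->
  x \in leaves u -> x \in leaves v -> (u \in subtrees v) || (v \in subtrees u).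
Proof.
elim/tree_ind2: t u v => [w|cs IH] u v Hun.
  by rewrite /= !in_cons !in_nil !orbF => /eqP-> /eqP->; rewrite self_in.
rewrite (subtreesE _ u) => /orP[/eqP-> Hv _ _|]; first by rewrite Hv orbT.
rewrite (subtreesE _ v) => Hu /orP[/eqP-> _ _|]; first by rewrite subtreesE Hu orbT.
move: Hu.
rewrite !strictE => /hasP[c1 Hc1 Hu] /hasP[c2 Hc2 Hv] Hx1 Hx2.
have E : c1 = c2 by apply: (child_disj Hun Hc1 Hc2 (x := x)); [exact: (leaves_sub Hu)| exact: (leaves_sub Hv)].
subst c2; apply: (allT_in IH Hc1) => //; exact: child_uniq Hun Hc1.
Qed.


Lemma proper_descE s u : proper_desc s u = (s \in strict_subtrees u).
Proof.
rewrite /proper_desc; apply/hasP/idP => [[v Hv /tree_eqbP->]//|H]; exists s => //.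
exact/tree_eqbP.
Qed.

Lemma key_lca t S S' x : uniq (leaves t) -> x \in S -> {subset S <= S'} ->
  {subset S' <= leaves t} ->
  let b := all (fun v => v \in leaves (lca S t)) S' in
  tree_eqb (lca S t) (lca S' t) = b /\ proper_desc (lca S t) (lca S' t) = ~~ b.
Proof.
move=> Hun xS HSS' HS'; rewrite proper_descE.
set U := lca S t; set W := lca S' t => b.
have HUW : U \in subtrees W.
  apply: (lca_lowest Hun xS (lca_in S' t)) => y /HSS' Hy; exact: lca_leaves.
have [Hb|Hb] := boolP b.
  have HWU : W \in subtrees U.
    apply: (lca_lowest Hun (HSS' _ xS) (lca_in S t)); exact/allP.
  have E : U = W.
    move: HUW; rewrite subtreesE => /orP[/eqP//|/tsize_lt H].
    by have := tsize_le HWU; rewrite leqNgt H.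
  rewrite -E; split; first exact/tree_eqbP.
  apply/negP => /tsize_lt; by rewrite ltnn.
have NE : U != W.
  apply/eqP => E; move/negP: Hb; apply; apply/allP => y Hy; rewrite E; exact: lca_leaves.
split; first by apply/tree_eqbP/eqP.
by move: HUW; rewrite subtreesE (negPf NE).
Qed.

Definition inL t (x y z : 'I_n) := z \in leaves (lca [:: x; y] t).


Lemma rel2E t x y z : uniq (leaves t) -> (forall v, v \in leaves t) ->
  rel2 t x y z = ~~ inL t x y z.
Proof.
move=> Hun Hall; rewrite /rel2.
have sub1 : {subset [:: x; y] <= [:: x; y; z]} by move=> v; rewrite !inE; case/orP => ->; rewrite ?orbT.
have [_ ->] := @key_lca t [:: x; y] [:: x; y; z] x Hun (mem_head _ _)
  sub1 (fun v _ => Hall v).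
have Hl := @lca_leaves [:: x; y] t (fun v _ => Hall v).
by rewrite /= Hl ?mem_head // Hl ?in_cons ?eqxx ?orbT // andbT.
Qed.

Lemma rel3E t x y z : uniq (leaves t) -> (forall v, v \in leaves t) ->
  rel3 t x y z = inL t x y z && inL t y z x.
Proof.
move=> Hun Hall; rewrite /rel3.
have sub1 : {subset [:: x; y] <= [:: x; y; z]} by move=> v; rewrite !inE; case/orP => ->; rewrite ?orbT.
have sub2 : {subset [:: y; z] <= [:: x; y; z]} by move=> v; rewrite !inE; case/orP => ->; rewrite ?orbT.
have [-> _] := @key_lca t [:: x; y] [:: x; y; z] x Hun (mem_head _ _)
  sub1 (fun v _ => Hall v).
have [-> _] := @key_lca t [:: y; z] [:: x; y; z] y Hun (mem_head _ _)
  sub2 (fun v _ => Hall v).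
have Hl := @lca_leaves [:: x; y] t (fun v _ => Hall v).
have Hl2 := @lca_leaves [:: y; z] t (fun v _ => Hall v).
rewrite /= Hl ?mem_head // Hl ?in_cons ?eqxx ?orbT //.
rewrite (Hl2 y) ?mem_head // (Hl2 z) ?inE ?eqxx ?orbT //.
by rewrite /inL !andbT.
Qed.

Lemma nested_lca t A B x : uniq (leaves t) -> (forall v, v \in leaves t) ->
  x \in A -> x \in B ->
  {subset A <= leaves (lca B t)} \/ {subset B <= leaves (lca A t)}.
Proof.
move=> Hun Hall xA xB.
have LA := @lca_leaves A t (fun v _ => Hall v).
have LB := @lca_leaves B t (fun v _ => Hall v).
have := nested Hun (lca_in A t) (lca_in B t) (LA _ xA) (LB _ xB).
case/orP => H; [left|right] => v Hv; apply: (leaves_sub H); auto.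
Qed.


Section HC.
Variable t : tree n.
Hypothesis Ht : HC_tree t.

Lemma HC_uniq : uniq (leaves t).
Proof. by case/andP: Ht => /perm_uniq -> _; exact: enum_uniq. Qed.

Lemma HC_all v : v \in leaves t.
Proof. by case/andP: Ht => /perm_mem -> _; rewrite mem_enum. Qed.

Lemma ex1 x y z : rel2 t x y z -> rel2 t x z y -> False.
Proof.
rewrite !(rel2E _ _ _ HC_uniq HC_all) /inL => /negP H1 /negP H2.
case: (nested_lca HC_uniq HC_all (mem_head x [:: y]) (mem_head x [:: z])) => H.
  by apply: H2; apply: H; rewrite !inE eqxx orbT.
by apply: H1; apply: H; rewrite !inE eqxx orbT.
Qed.

Lemma ex2 x y z : rel2 t x y z -> rel2 t y z x -> False.
Proof.
rewrite !(rel2E _ _ _ HC_uniq HC_all) /inL => /negP H1 /negP H2.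
have yA : y \in [:: x; y] by rewrite !inE eqxx orbT.
case: (nested_lca HC_uniq HC_all yA (mem_head y [:: z])) => H.
  by apply: H2; apply: H; rewrite !inE eqxx.
by apply: H1; apply: H; rewrite !inE eqxx orbT.
Qed.

Lemma ex3 x y z : rel2 t x z y -> rel2 t y z x -> False.
Proof.
rewrite !(rel2E _ _ _ HC_uniq HC_all) /inL => /negP H1 /negP H2.
have zA : z \in [:: x; z] by rewrite !inE eqxx orbT.
have zB : z \in [:: y; z] by rewrite !inE eqxx orbT.
case: (nested_lca HC_uniq HC_all zA zB) => H.
  by apply: H2; apply: H; rewrite !inE eqxx.
by apply: H1; apply: H; rewrite !inE eqxx.
Qed.

Lemma cover x y z : [|| rel2 t x y z, rel2 t x z y, rel2 t y z x | rel3 t x y z].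
Proof.
rewrite (rel3E _ _ _ HC_uniq HC_all) !(rel2E _ _ _ HC_uniq HC_all).
by case: (inL t x y z); case: (inL t x z y); case: (inL t y z x).
Qed.

End HC.
End TreeFacts.

Local Open Scope ring_scope.
Section Arith.
Variable R : realFieldType.
Implicit Types (d a b c : R).

Lemma max_le_sum a b : 0 <= a -> 0 <= b -> Num.max a b <= a + b.
Proof. move=> ha hb; rewrite ge_max; apply/andP; split; lra. Qed.

Lemma nf a b c d : 0 <= d -> 0 <= b -> 0 <= c -> a <= d * Num.max b c -> a <= d * b + d * c.
Proof.
move=> hd hb hc H; apply: (le_trans H); rewrite -mulrDr; apply: ler_wpM2l => //.
exact: max_le_sum.
Qed.

Lemma min3 X d a b c : X <= (d+1)*(a+b) -> X <= (d+1)*(a+c) -> X <= (d+1)*(b+c) ->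
  X <= (d+1) * Num.min (a+b) (Num.min (a+c) (b+c)).
Proof.
move=> h1 h2 h3; rewrite !minEle; case: ifP => _ //; case: ifP => _ //.
Qed.

Lemma branch1 d a b c : 1 <= d -> 0 <= a -> 0 <= b -> 0 <= c ->
  b <= d * Num.max a c -> c <= d * Num.max a b ->
  b + c <= (d+1) * Num.min (a+b) (Num.min (a+c) (b+c)).
Proof.
move=> hd ha hb hc /nf H1 /nf H2; have hd0 : 0 <= d by lra.
have := H1 hd0 ha hc; have := H2 hd0 ha hb => {H1 H2} H2 H1.
have : 0 <= d * a by exact: mulr_ge0.
have : 0 <= d * b by exact: mulr_ge0.
have : 0 <= d * c by exact: mulr_ge0.
move=> pa pb pc.
apply: min3; lra.
Qed.

Lemma branch2 d a b c : 1 <= d -> 0 <= a -> 0 <= b -> 0 <= c ->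
  a <= d * Num.max b c -> c <= d * Num.max a b ->
  a + c <= (d+1) * Num.min (a+b) (Num.min (a+c) (b+c)).
Proof.
move=> hd ha hb hc /nf H1 /nf H2; have hd0 : 0 <= d by lra.
have := H1 hd0 hb hc; have := H2 hd0 ha hb => {H1 H2} H2 H1.
have : 0 <= d * a by exact: mulr_ge0.
have : 0 <= d * b by exact: mulr_ge0.
have : 0 <= d * c by exact: mulr_ge0.
move=> pa pb pc.
apply: min3; lra.
Qed.

Lemma branch3 d a b c : 1 <= d -> 0 <= a -> 0 <= b -> 0 <= c ->
  a <= d * Num.max b c -> b <= d * Num.max a c ->
  a + b <= (d+1) * Num.min (a+b) (Num.min (a+c) (b+c)).
Proof.
move=> hd ha hb hc /nf H1 /nf H2; have hd0 : 0 <= d by lra.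
have := H1 hd0 hb hc; have := H2 hd0 ha hc => {H1 H2} H2 H1.
have : 0 <= d * a by exact: mulr_ge0.
have : 0 <= d * b by exact: mulr_ge0.
have : 0 <= d * c by exact: mulr_ge0.
move=> pa pb pc.
apply: min3; lra.
Qed.

Lemma branch4 d a b c : 1 <= d -> 0 <= a -> 0 <= b -> 0 <= c ->
  a <= d * Num.max b c -> b <= d * Num.max a c -> c <= d * Num.max a b ->
  a + b + c <= (d+1) * Num.min (a+b) (Num.min (a+c) (b+c)).
Proof.
move=> hd ha hb hc /nf H1 /nf H2 /nf H3; have hd0 : 0 <= d by lra.
have := H1 hd0 hb hc; have := H2 hd0 ha hc; have := H3 hd0 ha hb => {H1 H2 H3} H3 H2 H1.
have : 0 <= d * a by exact: mulr_ge0.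
have : 0 <= d * b by exact: mulr_ge0.
have : 0 <= d * c by exact: mulr_ge0.
move=> pa pb pc.
apply: min3; lra.
Qed.

Lemma minle1 a b c : Num.min (a+b) (Num.min (a+c) (b+c)) <= a + b.
Proof. by rewrite ge_min lexx. Qed.
Lemma minle2 a b c : Num.min (a+b) (Num.min (a+c) (b+c)) <= a + c.
Proof. by rewrite ge_min ge_min lexx orbT. Qed.
Lemma minle3 a b c : Num.min (a+b) (Num.min (a+c) (b+c)) <= b + c.
Proof. by rewrite ge_min ge_min lexx !orbT. Qed.
End Arith.

Section Main.
Variables (R : realType) (n : nat) (w : 'I_n -> 'I_n -> R).
Hypothesis hsym : forall i j, w i j = w j i.
Hypothesis hnn : forall i j, 0 <= w i j.

Definition mcost (i j k : 'I_n) :=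
  Num.min (w i j + w i k) (Num.min (w i j + w j k) (w i k + w j k)).

Lemma cost_lower (T : tree n) i j k : HC_tree T -> mcost i j k <= triplet_cost w T i j k.
Proof.
move=> hT; rewrite /triplet_cost /mcost.
have Hc := cover hT i j k.
case: ifP => H1; first exact: minle3.
case: ifP => H2; first exact: minle2.
case: ifP => H3; first exact: minle1.
rewrite H1 H2 H3 /= in Hc; rewrite Hc.
apply: le_trans (minle1 _ _ _) _.
have := hnn j k; lra.
Qed.

Lemma cost_upper (delta : R) (T : tree n) (i j k : 'I_n)
  (hdelta : 1 <= delta) (hT : HC_tree T)
  (hcons : forall i j k : 'I_n, i != j -> i != k -> j != k ->
     delta ^+ 2 * Num.max (w i k) (w j k) < w i j -> rel2 T i j k) :
  i != j -> i != k -> j != k ->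
  triplet_cost w T i j k <= (delta ^+ 2 + 1) * mcost i j k.
Proof.
move=> nij nik njk.
have hd : 1 <= delta ^+ 2.
  have : 1 * 1 <= delta * delta by apply: ler_pM => //; lra.
  by rewrite mul1r expr2.
have NF1 : ~~ rel2 T i j k -> w i j <= delta ^+ 2 * Num.max (w i k) (w j k).
  move=> H; rewrite leNgt; apply/negP => /(hcons i j k nij nik njk); exact/negP.
have NF2 : ~~ rel2 T i k j -> w i k <= delta ^+ 2 * Num.max (w i j) (w j k).
  move=> H; rewrite leNgt; apply/negP => H'.
  have : rel2 T i k j by apply: (hcons i k j nik nij); [rewrite eq_sym| rewrite (hsym k j)].
  exact/negP.
have NF3 : ~~ rel2 T j k i -> w j k <= delta ^+ 2 * Num.max (w i j) (w i k).
  move=> H; rewrite leNgt; apply/negP => H'.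
  have nji : j != i by rewrite eq_sym.
  have nki : k != i by rewrite eq_sym.
  have : rel2 T j k i by apply: (hcons j k i njk nji nki); rewrite (hsym j i) (hsym k i).
  exact/negP.
have ha := hnn i j; have hb := hnn i k; have hc := hnn j k.
rewrite /triplet_cost /mcost.
case: ifP => H1.
  apply: branch1 => //.
    by apply: NF2; apply/negP => H2; exact: (ex1 hT H1 H2).
  by apply: NF3; apply/negP => H2; exact: (ex2 hT H1 H2).
have N1 : ~~ rel2 T i j k by rewrite H1.
case: ifP => H2.
  apply: branch2 => //; first exact: NF1.
  by apply: NF3; apply/negP => H3; exact: (ex3 hT H2 H3).
have N2 : ~~ rel2 T i k j by rewrite H2.
case: ifP => H3.
  apply: branch3 => //; [exact: NF1|exact: NF2].
have N3 : forall x, x <= w i j + w i k + w j k -> x <= (delta ^+ 2 + 1) * Num.min (w i j + w i k) (Num.min (w i j + w j k) (w i k + w j k)).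
  move=> x Hx; apply: le_trans Hx _; apply: branch4 => //; [exact: NF1|exact: NF2|].
  by apply: NF3; rewrite H3.
case: ifP => _; apply: N3; last by lra.
by rewrite -addrA (addrC (w j k)) addrA.
Qed.
End Main.

Lemma ord_ltn_neq n (i j : 'I_n) : (i < j)%N -> i != j.
Proof. by move=> h; apply/eqP => E; rewrite E ltnn in h. Qed.

Unset Implicit Arguments.

Theorem lemma7 (R : realType) (n : nat) (w : 'I_n -> 'I_n -> R) (delta : R)
  (hdelta : 1 <= delta)
  (hsym : forall i j, w i j = w j i)
  (hnn : forall i j, 0 <= w i j)
  (T : tree n)
  (hT : binary_HC_tree T)
  (hcons : forall i j k : 'I_n, i != j -> i != k -> j != k ->
     delta ^+ 2 * Num.max (w i k) (w j k) < w i j -> rel2 T i j k) :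
  (rho w T <= (delta ^+ 2 + 1)%:E * rho_star w)%E.
Proof.
have hTHC : HC_tree T by case/andP: hT.
have hd : 1 <= delta ^+ 2.
  have : 1 * 1 <= delta * delta by apply: ler_pM => //; lra.
  by rewrite mul1r expr2.
have Hup : TC w T <= (delta ^+ 2 + 1) * BC w.
  rewrite /TC /BC mulr_sumr; apply: ler_sum => i _; rewrite mulr_sumr.
  apply: ler_sum => j Hij; rewrite mulr_sumr; apply: ler_sum => k Hjk.
  apply: (cost_upper hsym hnn hdelta hTHC hcons).
  - exact: ord_ltn_neq.
  - exact: ord_ltn_neq (ltn_trans Hij Hjk).
  - exact: ord_ltn_neq.
have Hlow : forall T', HC_tree T' -> BC w <= TC w T'.
  move=> T' HT'; rewrite /TC /BC; apply: ler_sum => i _.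
  apply: ler_sum => j Hij; apply: ler_sum => k Hjk.
  exact: (cost_lower hnn).
have BC0 : 0 <= BC w.
  rewrite /BC; apply: sumr_ge0 => i _; apply: sumr_ge0 => j _; apply: sumr_ge0 => k _.
  by rewrite !le_min !addr_ge0.
have TC0 : 0 <= TC w T by apply: le_trans BC0 (Hlow _ hTHC).
have rs : (1 <= rho_star w)%E.
  apply: le_ereal_inf_tmp => _ [T' HT' <-]; rewrite /rho; case: ifP => HB.
    by case: ifP => _ //; rewrite leey.
  have BCp : 0 < BC w by rewrite lt_neqAle eq_sym HB BC0.
  by rewrite lee_fin ler_pdivlMr // mul1r; apply: Hlow.
have rT : (rho w T <= (delta ^+ 2 + 1)%:E)%E.
  rewrite /rho; case: ifP => HB.
    have -> : TC w T == 0.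
      by rewrite eq_le TC0 andbT; move/eqP: HB Hup => ->; rewrite mulr0.
    by rewrite lee_fin; lra.
  have BCp : 0 < BC w by rewrite lt_neqAle eq_sym HB BC0.
  by rewrite lee_fin ler_pdivrMr.
apply: le_trans rT _; rewrite -{1}(mule1 ((delta ^+ 2 + 1)%:E)).
apply: lee_wpmul2l => //; rewrite lee_fin; lra.
Qed.
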